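(* Let $r>0$, $0<p<1$ and $q=1-p$. Let $N$ be a negative binomial random variable with $P(N=n)=\binom{r+n-1}{n}p^r q^n$, $n=0,1,2,\dots$, and conditionally on $N=n$ let $X$ be uniformly distributed on $\{0,1,\dots,n\}$, i.e. $P(X=x\mid N=n)=\frac{1}{n+1}$ for $x\in\{0,\dots,n\}$. Then for every $x=0,1,2,\dots$, $$P(X=x)=\frac{q^{x}p^{r}}{1+x}\binom{r+x-1}{x}\,{}_2F_1(1,r+x;2+x;q).$$
   Context: For real $r>0$, $\binom{r+n-1}{n}=\frac{\Gamma(r+n)}{n!\,\Gamma(r)}$. The Gauss hypergeometric function is ${}_2F_1(a,b;c;z)=\sum_{n=0}^\infty \frac{(a)_n(b)_n}{(c)_n}\frac{z^n}{n!}$ for $|z|<1$, where $(s)_0=1$ and $(s)_n=s(s+1)\cdots(s+n-1)$ for $n\ge1$. The distribution of $X$ is called the Uniform-negative binomial distribution $\mathcal{UNB}(r,p)$. *)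

(* Defs.v *)
From mathcomp Require Import all_boot all_order all_algebra.
From mathcomp Require Import all_classical all_reals all_analysis.
Set Implicit Arguments. Unset Strict Implicit. Unset Printing Implicit Defensive.
Import Order.TTheory GRing.Theory Num.Theory.
Import numFieldNormedType.Exports.
Local Open Scope ring_scope.

Definition poch {R : realType} (s : R) (n : nat) : R :=
  \prod_(i < n) (s + i%:R).

(* Generalized binomial coefficient binom(r+n-1, n) = Gamma(r+n)/(n! Gamma(r))
   = (r)_n / n!  (for r > 0). *)
Definition gbinom {R : realType} (r : R) (n : nat) : R :=
  poch r n / (n`!)%:R.

Definition hyp2F1_term {R : realType} (a b c z : R) (n : nat) : R :=
  poch a n * poch b n / poch c n * z ^+ n / (n`!)%:R.

Definition hyp2F1 {R : realType} (a b c z : R) : R :=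
  limn (series (hyp2F1_term a b c z)).

Definition negbin_pmf {R : realType} (r p : R) (n : nat) : R :=
  gbinom r n * powR p r * (1 - p) ^+ n.

(* Main.v *)
Require Import Defs.
From mathcomp Require Import all_boot all_order all_algebra.
From mathcomp Require Import all_classical all_reals all_analysis.
From mathcomp Require Import ring lra.
Import Order.TTheory GRing.Theory Num.Theory.
Import numFieldNormedType.Exports.
Local Open Scope classical_set_scope.
Local Open Scope ring_scope.

Lemma poch_add {R : realType} (s : R) m k :
  poch s (m + k) = poch s m * poch (s + m%:R) k.
Proof.
rewrite /poch big_split_ord /=; congr (_ * _).
by apply: eq_bigr => i _; rewrite natrD addrA.
Qed.

Lemma poch1 {R : realType} n : poch (1 : R) n = (n`!)%:R.
Proof.
elim: n => [|n IH]; first by rewrite /poch big_ord0.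
by rewrite /poch big_ord_recr /= -/(poch 1 n) IH factS natrM mulrC addrC -natr1.
Qed.

Lemma poch_gt0 {R : realType} (s : R) n : 0 < s -> 0 < poch s n.
Proof.
move=> hs; rewrite /poch; apply: prodr_gt0 => i _.
by apply: ltr_wpDr.
Qed.

Lemma key {R : realType} (r q pr : R) (x k : nat) : 0 < r ->
  (((k + x).+1%:R)^-1 * (gbinom r (k + x) * pr * q ^+ (k + x))) =
  (q ^+ x * pr / (1 + x%:R) * gbinom r x) *
     hyp2F1_term 1 (r + x%:R) (2 + x%:R) q k.
Proof.
move=> hr.
rewrite /gbinom /hyp2F1_term poch1 addnC poch_add.
have hQ : poch (2 + x%:R) k * (x.+1`!)%:R = ((x + k).+1`!)%:R :> R.
  rewrite -[in RHS]poch1 -[(x.+1)`!%:R](poch1 (R:=R)) -addSn poch_add mulrC.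
  have -> : (1 + x.+1%:R : R) = 2 + x%:R by rewrite -natr1; ring.
  by [].
have Q0 : poch (2 + x%:R) k != 0 :> R.
  by apply/lt0r_neq0/poch_gt0; rewrite ltr_wpDr.
move: hQ; rewrite factS (factS (x + k)) !natrM => hQ.
have F0 : (x + k)`!%:R != 0 :> R by rewrite pnatr_eq0 -lt0n fact_gt0.
have G0 : x`!%:R != 0 :> R by rewrite pnatr_eq0 -lt0n fact_gt0.
have K0 : k`!%:R != 0 :> R by rewrite pnatr_eq0 -lt0n fact_gt0.
have X0 : 1 + x%:R != 0 :> R by rewrite addrC natr1 pnatr_eq0.
have XK0 : (x + k).+1%:R != 0 :> R by rewrite pnatr_eq0.
have -> : (x + k)`!%:R = poch (2 + x%:R) k * (x.+1%:R * x`!%:R) / (x + k).+1%:R :> R.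
  by rewrite hQ mulrC mulKf.
rewrite exprD -natr1 addrC.
have X1 : x.+1%:R = 1 + x%:R :> R by rewrite -natr1 addrC.
rewrite X1 in Q0 *.
field.
rewrite Q0 G0 K0 X0 /=.
by rewrite addrC -natrD natr1 pnatr_eq0.
Qed.

Theorem theorem1 (R : realType) (d : measure_display) (T : measurableType d)
  (P : probability T R) (N X : T -> nat) (r p : R)
  (hr : 0 < r) (hp0 : 0 < p) (hp1 : p < 1)
  (mN : forall n : nat, measurable (N @^-1` [set n]))
  (mX : forall x : nat, measurable (X @^-1` [set x]))
  (hN : forall n : nat, P (N @^-1` [set n]) = (negbin_pmf r p n)%:E)
  (hXN : forall n x : nat,
      P (X @^-1` [set x] `&` N @^-1` [set n]) =
      ((if (x <= n)%N then (n.+1%:R)^-1 else 0) * negbin_pmf r p n)%:E) :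
  forall x : nat,
    P (X @^-1` [set x]) =
    ((1 - p) ^+ x * powR p r / (1 + x%:R) * gbinom r x
       * hyp2F1 1 (r + x%:R) (2 + x%:R) (1 - p))%:E.
Proof.
move=> x.
set a := fun n : nat => ((if (x <= n)%N then (n.+1%:R)^-1 else 0) * negbin_pmf r p n) : R.
set F := fun n : nat => X @^-1` [set x] `&` N @^-1` [set n].
have mF : forall n, measurable (F n) by move=> n; exact: measurableI.
have tF : trivIset setT F.
  by move=> i j _ _ [t [[_ Hi] [_ Hj]]]; rewrite -Hi -Hj.
have UF : \bigcup_n F n = X @^-1` [set x].
  apply/seteqP; split => t /=; first by move=> [n _ []].
  by move=> Hx; exists (N t) => //.
have cP := @measure_sigma_additive _ _ _ P F mF tF.
rewrite UF in cP.
have finP : P (X @^-1` [set x]) \is a fin_num by apply: fin_num_measure.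
set l := fine (P (X @^-1` [set x])).
have Pl : P (X @^-1` [set x]) = l%:E by rewrite /l fineK.
have ca : series a @ \oo --> l.
  have cP2 : (fun n => \sum_(0 <= i < n) P (F i))%E @ \oo --> l%:E.
    by rewrite -Pl; exact: cP.
  have : (fun n => (series a n)%:E) @ \oo --> l%:E.
    apply: cvg_trans cP2; apply: near_eq_cvg; near=> n.
    by rewrite /series /= -sumEFin; apply: eq_bigr => i _; rewrite hXN.
  move/fine_cvgP => [_ H]; exact: H.
set C := (1 - p) ^+ x * powR p r / (1 + x%:R) * gbinom r x.
have C0 : C != 0.
  have q0 : 0 < 1 - p by rewrite subr_gt0.
  have g0 : 0 < gbinom r x by rewrite /gbinom divr_gt0 ?poch_gt0 // ltr0n fact_gt0.
  have x0 : 0 < 1 + x%:R :> R by rewrite ltr_wpDr.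
  apply/lt0r_neq0; rewrite /C; apply: mulr_gt0 => //; apply: divr_gt0 => //.
  by apply: mulr_gt0; [exact: exprn_gt0 | exact: powR_gt0].
set h := hyp2F1_term 1 (r + x%:R) (2 + x%:R) (1 - p).
have sh : forall n, series h n = series a (n + x) / C.
  move=> n; suff -> : series a (n + x) = C * series h n by rewrite mulrC mulKf.
  rewrite /series /= (@big_cat_nat _ _ _ x) ?leq_addl //=.
  rewrite big_nat big1 ?add0r; last first.
    by move=> i /andP[_ ilt]; rewrite /a leqNgt ilt /= mul0r.
  rewrite -{1}(add0n x) big_addn addnK mulr_sumr.
  apply: eq_bigr => i _; rewrite /a leq_addl /negbin_pmf; exact: key.
have ch : series h @ \oo --> l / C.
  have -> : series h = (fun n => series a (n + x)) \* cst C^-1.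
    by apply: funext => n; rewrite sh.
  apply: cvgM; last exact: cvg_cst.
  by move: ca; rewrite -(cvg_shiftn x).
rewrite Pl /hyp2F1 -/h (cvg_lim _ ch) //.
congr (_%:E); rewrite -/C; field.
exact: C0.
Unshelve. all: by end_near.
Qed.
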